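(* For every positive integer $n$, let $B_n$ be the $n\times n$ matrix over $\mathbb{Z}$ whose $(i,j)$-entry ($1\le i,j\le n$) is $1$ if $i+j$ is a power of two and $0$ otherwise. Then $\det B_n\in\{1,-1\}$.
   Context: Powers of two are $1,2,4,8,\ldots$. *)

(* Defs.v *)
From mathcomp Require Import all_boot all_order all_algebra.
Set Implicit Arguments. Unset Strict Implicit. Unset Printing Implicit Defensive.
Import GRing.Theory Num.Theory.

(* m is a power of two: m = 2^k for some k (k < m+1 suffices since 2^k > k). *)
Definition is_pow2 (m : nat) : bool := [exists k : 'I_m.+1, m == 2 ^ k].

(* B_n over int, indices i j : 'I_n correspond to 1-based i+1, j+1. *)
Definition Bmat (n : nat) : 'M[int]_n :=
  \matrix_(i < n, j < n) (if is_pow2 (i.+1 + j.+1) then 1%R else 0%R).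

(* Main.v *)
Require Import Defs.
From mathcomp Require Import all_boot all_order all_fingroup all_algebra zify.

Lemma is_pow2P m : reflect (exists k, m = 2^k) (is_pow2 m).
Proof.
apply: (iffP existsP) => [[k /eqP ->]|[k ->]]; first by exists k.
have hk: k < (2^k).+1 by rewrite ltnS ltnW // ltn_expl.
by exists (Ordinal hk).
Qed.

Lemma pow2_mid e a : 2^e < a -> a < 4 * 2^e -> is_pow2 a -> a = 2 * 2^e.
Proof.
move=> h1 h2 /is_pow2P [k hk]; subst a.
have hek : e < k by rewrite -(ltn_exp2l _ _ (isT : 1 < 2)).
have hke : k < e.+2 by rewrite -(ltn_exp2l _ _ (isT: 1<2)) !expnS mulnA.
have -> : k = e.+1 by lia.
by rewrite expnS.
Qed.

Definition Good n (s : nat -> nat) :=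
  [/\ (forall i, 1 <= i <= n -> 1 <= s i <= n /\ is_pow2 (i + s i)),
      (forall i j, 1 <= i <= n -> 1 <= j <= n -> s i = s j -> i = j) &
      (forall j, 1 <= j <= n -> exists i, 1 <= i <= n /\ s i = j)].

Lemma good_step n s : 0 < n -> Good n s ->
  let q := 2 ^ trunc_log 2 n in
  (forall i, 2 * q - n <= i <= n -> s i = 2 * q - i) /\ Good (2 * q - n - 1) s.
Proof.
move=> n0 [H1 H2 H3] q.
have hq1 : q <= n by apply: trunc_logP.
have hq2 : n < 2 * q by rewrite /q -expnS; apply: trunc_log_ltn.
have q0 : 0 < q by rewrite /q expn_gt0.
have hi : forall i, q <= i <= n -> s i = 2 * q - i.
  move=> i hi; have [h1 h2] := H1 i ltac:(lia).
  have := pow2_mid (trunc_log 2 n) (i + s i); rewrite -/q.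
  move=> /(_ ltac:(lia) ltac:(lia) h2); lia.
have hj : forall j, q <= j <= n -> s (2 * q - j) = j.
  move=> j hj; have [i [hi1 hi2]] := H3 j ltac:(lia).
  have [h1 h2] := H1 i hi1.
  have := pow2_mid (trunc_log 2 n) (i + s i); rewrite -/q.
  move=> /(_ ltac:(lia) ltac:(lia) h2) e2.
  have -> : 2 * q - j = i by lia. done.
have hall : forall i, 2 * q - n <= i <= n -> s i = 2 * q - i.
  move=> i hi'; case: (leqP q i) => hqi; first by apply: hi; lia.
  have := hj (2 * q - i) ltac:(lia). have -> : 2 * q - (2 * q - i) = i by lia.
  lia.
split => //; split.
- move=> i hi'; have [h1 h2] := H1 i ltac:(lia); split => //.
  case: (leqP (2 * q - n) (s i)) => hs; last by lia.
  have e1 := hall (s i) ltac:(lia).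
  have e2 := hall (2 * q - s i) ltac:(lia).
  have e3 : s (2 * q - s i) = s i by rewrite e2; lia.
  have : 2 * q - s i = i by apply: H2 e3; lia.
  lia.
- move=> i j hi' hj'; apply: H2; lia.
- move=> j hj'; have [i [hi1 hi2]] := H3 j ltac:(lia).
  exists i; split => //.
  case: (leqP (2 * q - n) i) => hs; last by lia.
  have := hall i ltac:(lia). lia.
Qed.

Lemma good_uniq n : forall s t, Good n s -> Good n t ->
  forall i, 1 <= i <= n -> s i = t i.
Proof.
elim/ltn_ind: n => n IH s t gs gt i hi.
have n0 : 0 < n by lia.
have [hs gs'] := @good_step n s n0 gs.
have [ht gt'] := @good_step n t n0 gt.
set q := 2 ^ trunc_log 2 n in hs ht gs' gt'.
have hq1 : q <= n by apply: trunc_logP.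
case: (leqP (2 * q - n) i) => h.
  rewrite hs ?ht //; lia.
apply: (IH (2 * q - n - 1)) => //; lia.
Qed.

Definition Inv n (f : nat -> nat) :=
  forall i, 1 <= i <= n -> [/\ 1 <= f i <= n, is_pow2 (i + f i) & f (f i) = i].

Lemma inv_exists n : exists f, Inv n f.
Proof.
elim/ltn_ind: n => n IH.
case: (posnP n) => [->|n0]; first by exists id => i; lia.
set q := 2 ^ trunc_log 2 n.
have hq1 : q <= n by apply: trunc_logP.
have hq2 : n < 2 * q by rewrite /q -expnS; apply: trunc_log_ltn.
have [g hg] := IH (2 * q - n - 1) ltac:(lia).
exists (fun i => if 2 * q - n <= i then 2 * q - i else g i) => i hi.
case: (leqP (2 * q - n) i) => h.
  have -> : 2 * q - n <= 2 * q - i = true by apply/idP; lia.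
  split; first lia.
    apply/is_pow2P; exists (trunc_log 2 n).+1; rewrite expnS -/q; lia.
  lia.
have [g1 g2 g3] := hg i ltac:(lia).
have -> : 2 * q - n <= g i = false by apply/negbTE; rewrite -ltnNge; lia.
split => //; lia.
Qed.

Lemma inv_good n f : Inv n f -> Good n f.
Proof.
move=> H; split.
- by move=> i /H [].
- move=> i j hi hj e; have [_ _ a] := H i hi; have [_ _ b] := H j hj.
  by rewrite -a -b e.
- move=> j hj; have [a _ b] := H j hj; by exists (f j).
Qed.

Import GRing.Theory.
Local Open Scope ring_scope.

Theorem mainTheorem5 (n : nat) (hn : (0 < n)%N) :
  \det (Bmat n) = 1 \/ \det (Bmat n) = -1.
Proof.
case: n hn => // n' _.
have [f hf] := inv_exists n'.+1.
have gf := @inv_good _ _ hf.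
pose g (i : 'I_n'.+1) : 'I_n'.+1 := inord (f i.+1).-1.
have gv : forall i : 'I_n'.+1, (g i).+1 = f i.+1.
  move=> i; have [h1 _ _] := hf i.+1 ltac:(have := ltn_ord i; lia).
  rewrite /g inordK; lia.
have ginj : injective g.
  move=> i j e; have := gv i; have := gv j; rewrite e => a b.
  have [_ _ c] := hf i.+1 ltac:(have := ltn_ord i; lia).
  have [_ _ d] := hf j.+1 ltac:(have := ltn_ord j; lia).
  apply: val_inj => /=; apply/eqP; rewrite -eqSS; apply/eqP.
  by rewrite -c -d -a -b.
pose s0 := perm ginj.
rewrite /determinant (bigD1 s0) //=.
set T := (_ + _).
suff -> : T = (-1) ^+ s0.
  by case: odd_perm; [right|left]; rewrite ?expr1 ?expr0.
rewrite /T [X in _ + X]big1; last first.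
  move=> s hs.
  case: (boolP [forall i : 'I_n'.+1, is_pow2 (i.+1 + (s i).+1)%N]) => H; last first.
    move/forallPn: H => [i hi].
    by rewrite (bigD1 i) //= mxE (negbTE hi) mul0r mulr0.
  exfalso; move/negP: hs; apply; apply/eqP/permP => x.
  pose sn (k : nat) := (s (inord k.-1)).+1.
  have gsn : Good n'.+1 sn.
    split.
    - move=> i hi; split; first by rewrite /sn; have := ltn_ord (s (inord i.-1)); lia.
      have := forallP H (inord i.-1); rewrite inordK; last lia.
      by have -> : (i.-1).+1 = i by lia.
    - move=> i j hi hj; rewrite /sn => -[] e.
      have := congr1 val (perm_inj (val_inj e)); rewrite /= !inordK; lia.
    - move=> j hj; exists (s^-1 (inord j.-1))%g.+1; split.
        have := ltn_ord (s^-1 (inord j.-1))%g; lia.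
      rewrite /sn /= inord_val permKV inordK; lia.
  have := @good_uniq _ _ _ gsn gf x.+1 ltac:(have := ltn_ord x; lia).
  rewrite /sn /= inord_val -gv permE => -[] e.
  by apply: val_inj.
rewrite addr0 big1 ?mulr1 //.
  move=> i _; rewrite mxE permE.
  have [_ h _] := hf i.+1 ltac:(have := ltn_ord i; lia).
  by rewrite gv h.
Qed.
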